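(* In the database model described in the context, let $\mathbf r=(r_1,\dots,r_N)$ satisfy $P(\mathbf{LR}_{\mathcal D}=\mathbf r)>0$, set $r_0=1$, and let $1\le i\le N$ with $0<\pi_i<1$. Then \[ \frac{P(R=i\mid \mathbf{LR}_{\mathcal D}=\mathbf r)}{P(R\ne i\mid \mathbf{LR}_{\mathcal D}=\mathbf r)}=\frac{r_i\pi_i}{\sum_{k=0,\,k\ne i}^N r_k\pi_k}, \] and, whenever the denominators are nonzero, the likelihood ratio in favour of $R=i$ is \[ \frac{P(\mathbf{LR}_{\mathcal D}=\mathbf r\mid R=i)}{P(\mathbf{LR}_{\mathcal D}=\mathbf r\mid R\ne i)}=\frac{r_i(1-\pi_i)}{\sum_{k=1,\,k\ne i}^N r_k\pi_k+\pi_0}. \]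
   Context: Let $E$ be a countable set and let $S$, $G$ be $E$-valued random variables such that for every $e\in E$, $P(S=e)>0$ implies $P(G=e)>0$. For $e\in E$ define the likelihood ratio $LR(e)=P(S=e)/P(G=e)$ if $P(G=e)>0$ and $LR(e)=0$ otherwise. Database model: fix $N\ge1$. Let $R$ be a random variable with values in $\{0,1,\dots,N\}$; we write $R\in\mathcal D$ for $R\in\{1,\dots,N\}$ and $R\notin\mathcal D$ for $R=0$. Put $\pi_i=P(R=i)$ for $1\le i\le N$, $\pi_{\mathcal D}=\sum_{i=1}^N\pi_i$ and $\pi_0=1-\pi_{\mathcal D}=P(R=0)$. There are $E$-valued random variables $P_1,\dots,P_N$ such that conditionally on $R=i$ with $1\le i\le N$, they are independent, $P_i$ has the distribution of $S$ and $P_j$ ($j\ne i$) has the distribution of $G$; and conditionally on $R=0$ they are independent, each with the distribution of $G$. Set $\mathbf{LR}_{\mathcal D}=(LR(P_1),\dots,LR(P_N))$. *)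

(* Defs.v *)
From Stdlib Require Import Reals Classical ClassicalEpsilon Arith.
Open Scope R_scope.

Definition prob_mass (p : nat -> R) : Prop :=
  (forall w, 0 <= p w) /\ infinite_sum p 1.

Definition Prob (p : nat -> R) (A : nat -> Prop) : R :=
  epsilon (inhabits 0)
    (fun l => infinite_sum
       (fun w => if excluded_middle_informative (A w) then p w else 0) l).

Definition CondProb (p : nat -> R) (A B : nat -> Prop) : R :=
  Prob p (fun w => A w /\ B w) / Prob p B.

Definition LR (p : nat -> R) (S G : nat -> nat) (e : nat) : R :=
  if Rlt_dec 0 (Prob p (fun w => G w = e))
  then Prob p (fun w => S w = e) / Prob p (fun w => G w = e)
  else 0.

Fixpoint prod1 (n : nat) (f : nat -> R) : R :=
  match n with O => 1 | S m => prod1 m f * f (S m) end.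
Fixpoint sum1 (n : nat) (f : nat -> R) : R :=
  match n with O => 0 | S m => sum1 m f + f (S m) end.

Definition pi (p : nat -> R) (Rv : nat -> nat) (k : nat) : R :=
  Prob p (fun w => Rv w = k).

(* The database model: R takes values in {0,..,N}; conditionally on R = i
   (1 <= i <= N) the P_1..P_N are independent, P_i ~ S and P_j ~ G (j<>i);
   conditionally on R = 0 they are independent, each ~ G.  In the discrete
   setting this is exactly the product form of the joint law below. *)
Definition database_model (p : nat -> R) (N : nat) (Rv : nat -> nat)
    (Pv : nat -> nat -> nat) (S G : nat -> nat) : Prop :=
  (forall w, (Rv w <= N)%nat) /\
  (forall i, (1 <= i <= N)%nat -> forall e : nat -> nat,
     Prob p (fun w => Rv w = i /\ forall j, (1 <= j <= N)%nat -> Pv j w = e j)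
     = pi p Rv i * prod1 N (fun j => if Nat.eq_dec j i
                                     then Prob p (fun w => S w = e j)
                                     else Prob p (fun w => G w = e j))) /\
  (forall e : nat -> nat,
     Prob p (fun w => Rv w = 0%nat /\ forall j, (1 <= j <= N)%nat -> Pv j w = e j)
     = pi p Rv 0 * prod1 N (fun j => Prob p (fun w => G w = e j))).

Definition LRD_event (p : nat -> R) (S G : nat -> nat) (Pv : nat -> nat -> nat)
    (N : nat) (r : nat -> R) (w : nat) : Prop :=
  forall j, (1 <= j <= N)%nat -> LR p S G (Pv j w) = r j.

(* Main.v *)
Require Import Defs.
From Stdlib Require Import Reals Classical ClassicalEpsilon Arith Lra Lia.
Open Scope R_scope.

Definition ind (p : nat -> R) (A : nat -> Prop) (w : nat) : R :=
  if excluded_middle_informative (A w) then p w else 0.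

Lemma ind_nonneg p A w : prob_mass p -> 0 <= ind p A w.
Proof. intros [Hp _]; unfold ind; destruct excluded_middle_informative; [apply Hp|lra]. Qed.

Lemma ind_le p A w : prob_mass p -> ind p A w <= p w.
Proof. intros [Hp _]; unfold ind; destruct excluded_middle_informative; [lra|apply Hp]. Qed.

Lemma ind_ext_at p A B w : (A w <-> B w) -> ind p A w = ind p B w.
Proof. intros H; unfold ind; do 2 destruct excluded_middle_informative; tauto. Qed.

Lemma isum_ext f g l : (forall n, f n = g n) -> infinite_sum f l -> infinite_sum g l.
Proof.
  intros E H eps He; destruct (H eps He) as [N0 HN]; exists N0; intros n Hn.
  rewrite <- (sum_eq f g n) by (intros; apply E). auto.
Qed.

Lemma Prob_spec p A : prob_mass p -> infinite_sum (ind p A) (Prob p A).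
Proof.
  intros Hm. unfold Prob. apply (epsilon_spec (inhabits 0)
    (fun l => infinite_sum (fun w => if excluded_middle_informative (A w) then p w else 0) l)).
  destruct (growing_cv (fun n => sum_f_R0 (ind p A) n)) as [l Hl].
  - intro n; simpl; pose proof (ind_nonneg p A (S n) Hm); lra.
  - exists 1. intros x [i ->].
    apply Rle_trans with (sum_f_R0 p i).
    + apply sum_Rle; intros; apply ind_le; auto.
    + destruct Hm as [Hp H1]; apply sum_incr; auto.
  - exists l; exact Hl.
Qed.

Lemma Prob_unique p A l : prob_mass p -> infinite_sum (ind p A) l -> Prob p A = l.
Proof. intros Hm H; eapply uniqueness_sum; [apply Prob_spec; auto| exact H]. Qed.

Lemma Prob_ext p A B : prob_mass p -> (forall w, A w <-> B w) -> Prob p A = Prob p B.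
Proof.
  intros Hm H; apply Prob_unique; auto.
  apply isum_ext with (ind p B); [intro n; apply ind_ext_at; symmetry; apply H|].
  apply Prob_spec; auto.
Qed.

Lemma sum_le_Prob p A M : prob_mass p -> sum_f_R0 (ind p A) M <= Prob p A.
Proof. intros Hm; apply sum_incr; [apply Prob_spec; auto| intros; apply ind_nonneg; auto]. Qed.

Lemma Prob_nonneg p A : prob_mass p -> 0 <= Prob p A.
Proof.
  intros Hm; apply Rle_trans with (sum_f_R0 (ind p A) 0); [simpl; apply ind_nonneg; auto|].
  apply sum_le_Prob; auto.
Qed.

Lemma Prob_false p : prob_mass p -> Prob p (fun _ => False) = 0.
Proof.
  intros Hm; apply Prob_unique; auto.
  intros eps He; exists 0%nat; intros n _.
  rewrite (sum_eq _ (fun _ => 0)) by (intros; unfold ind; destruct excluded_middle_informative; tauto).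
  rewrite sum_cte; unfold Rdist. rewrite Rmult_0_l, Rminus_0_r, Rabs_R0; lra.
Qed.

Lemma Prob_true p : prob_mass p -> Prob p (fun _ => True) = 1.
Proof.
  intros Hm; apply Prob_unique; auto.
  apply isum_ext with p; [intro n; unfold ind; destruct excluded_middle_informative; tauto|].
  apply Hm.
Qed.

Lemma Prob_add p A B : prob_mass p -> (forall w, A w -> B w -> False) ->
  Prob p (fun w => A w \/ B w) = Prob p A + Prob p B.
Proof.
  intros Hm D; apply Prob_unique; auto.
  apply isum_ext with (fun n => ind p A n + ind p B n).
  - intro n; unfold ind; do 3 destruct excluded_middle_informative; try lra; firstorder.
  - intros eps He.
    destruct (CV_plus _ _ _ _ (Prob_spec p A Hm) (Prob_spec p B Hm) eps He) as [N0 HN].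
    exists N0; intros n Hn; rewrite sum_plus; apply HN; auto.
Qed.

Lemma Prob_mono p A B : prob_mass p -> (forall w, A w -> B w) -> Prob p A <= Prob p B.
Proof.
  intros Hm H.
  assert (E : Prob p B = Prob p (fun w => A w \/ (B w /\ ~ A w))).
  { apply Prob_ext; auto. intro w; destruct (classic (A w)); firstorder. }
  rewrite E, Prob_add; auto; [|tauto].
  pose proof (Prob_nonneg p (fun w => B w /\ ~ A w) Hm); lra.
Qed.

Lemma isum_char s l : (forall n, 0 <= s n) -> (forall n, sum_f_R0 s n <= l) ->
  (forall eps, eps > 0 -> exists n, l - eps < sum_f_R0 s n) -> infinite_sum s l.
Proof.
  intros H0 Hu Ha eps He. destruct (Ha eps He) as [n0 Hn0]. exists n0; intros n Hn.
  assert (sum_f_R0 s n0 <= sum_f_R0 s n).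
  { induction Hn; [lra|]. simpl; specialize (H0 (S m)); lra. }
  specialize (Hu n). unfold Rdist; rewrite Rabs_left1; lra.
Qed.

Lemma Prob_finunion p (A : nat -> nat -> Prop) : prob_mass p ->
  (forall x y w, A x w -> A y w -> x = y) -> forall n,
  Prob p (fun w => exists x, (x <= n)%nat /\ A x w) = sum_f_R0 (fun x => Prob p (A x)) n.
Proof.
  intros Hm D n; induction n.
  - simpl; apply Prob_ext; auto; intro w; split; [intros [x [Hx H]]; replace 0%nat with x by lia; auto| intros; exists 0%nat; auto].
  - simpl. rewrite <- IHn.
    rewrite <- Prob_add.
    + apply Prob_ext; auto. intro w; split.
      * intros [x [Hx H]]. destruct (Nat.eq_dec x (S n)); [subst; right; auto| left; exists x; split; auto; lia].
      * intros [[x [Hx H]]|H]; [exists x; split; auto| exists (S n); auto].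
    + auto.
    + intros w [x [Hx H]] H'. specialize (D _ _ _ H H'). lia.
Qed.

Lemma cover (A : nat -> nat -> Prop) : forall M, exists n, forall w, (w <= M)%nat ->
  (exists x, A x w) -> exists x, (x <= n)%nat /\ A x w.
Proof.
  induction M.
  - destruct (classic (exists x, A x 0%nat)) as [[x Hx]|Hn].
    + exists x; intros w Hw _; replace w with 0%nat by lia; exists x; auto.
    + exists 0%nat; intros w Hw Hx; replace w with 0%nat in Hx by lia; tauto.
  - destruct IHM as [n Hn].
    destruct (classic (exists x, A x (S M))) as [[x Hx]|Hnx].
    + exists (Nat.max n x); intros w Hw Hex. destruct (Nat.eq_dec w (S M)).
      * subst; exists x; split; auto; lia.
      * destruct (Hn w) as [y [Hy H]]; auto; try lia. exists y; split; auto; lia.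
    + exists n; intros w Hw Hex. destruct (Nat.eq_dec w (S M)); [subst; tauto|].
      apply Hn; auto; lia.
Qed.

Lemma Prob_countable p (A : nat -> nat -> Prop) : prob_mass p ->
  (forall x y w, A x w -> A y w -> x = y) ->
  infinite_sum (fun x => Prob p (A x)) (Prob p (fun w => exists x, A x w)).
Proof.
  intros Hm D. apply isum_char.
  - intros; apply Prob_nonneg; auto.
  - intro n; rewrite <- Prob_finunion by auto. apply Prob_mono; auto; firstorder.
  - intros eps He. destruct (Prob_spec p (fun w => exists x, A x w) Hm eps He) as [N0 HN].
    specialize (HN N0 (le_n _)). unfold Rdist in HN; apply Rabs_def2 in HN.
    destruct (cover A N0) as [n Hn]. exists n.
    rewrite <- Prob_finunion by auto.
    assert (sum_f_R0 (ind p (fun w => exists x, A x w)) N0 =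
            sum_f_R0 (ind p (fun w => exists x, (x <= n)%nat /\ A x w)) N0).
    { apply sum_eq; intros w Hw; apply ind_ext_at; split; [apply Hn; auto| firstorder]. }
    pose proof (sum_le_Prob p (fun w => exists x, (x <= n)%nat /\ A x w) N0 Hm). lra.
Qed.

Lemma isum_scal f l K : infinite_sum f l -> infinite_sum (fun x => K * f x) (K * l).
Proof.
  intros H.
  assert (Hc : Un_cv (fun _ => K) K).
  { intros eps He; exists 0%nat; intros; unfold Rdist; rewrite Rminus_diag, Rabs_R0; lra. }
  intros eps He. destruct (CV_mult _ _ _ _ Hc H eps He) as [N0 HN]. exists N0; intros n Hn.
  rewrite <- (sum_eq (fun x => f x * K)) by (intros; ring). rewrite <- scal_sum. apply HN; auto.
Qed.

Lemma prod1_ext n f g : (forall j, (1 <= j <= n)%nat -> f j = g j) -> prod1 n f = prod1 n g.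
Proof. induction n; intros H; simpl; auto. f_equal; [apply IHn; intros; apply H; lia| apply H; lia]. Qed.

Lemma sum1_ext n f g : (forall j, (1 <= j <= n)%nat -> f j = g j) -> sum1 n f = sum1 n g.
Proof. induction n; intros H; simpl; auto. f_equal; [apply IHn; intros; apply H; lia| apply H; lia]. Qed.

Lemma sum1_scal n f K : K * sum1 n f = sum1 n (fun k => K * f k).
Proof. induction n; simpl; [ring| rewrite <- IHn; ring]. Qed.

Lemma prod1_extract n f c : (1 <= c <= n)%nat ->
  prod1 n f = f c * prod1 n (fun j => if Nat.eq_dec j c then 1 else f j).
Proof.
  induction n; intros Hc; [lia|]. cbn [prod1].
  destruct (Nat.eq_dec (S n) c).
  - subst. rewrite (prod1_ext n (fun j => if Nat.eq_dec j (S n) then 1 else f j) f).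
    + destruct (Nat.eq_dec (S n) (S n)); [ring|lia].
    + intros j Hj; destruct Nat.eq_dec; auto; lia.
  - rewrite IHn by lia. destruct (Nat.eq_dec (S n) c); [lia|]. ring.
Qed.

Definition law (Sv G : nat -> nat) (k j : nat) : nat -> nat :=
  if Nat.eq_dec j k then Sv else G.
Definition Qm p Sv G k j (C : nat -> Prop) := Prob p (fun w => C (law Sv G k j w)).

Definition Ev (N : nat) (Rv : nat -> nat) (Pv : nat -> nat -> nat) m k
  (B : nat -> nat -> Prop) (e : nat -> nat) (w : nat) : Prop :=
  Rv w = k /\ forall j, (1 <= j <= N)%nat ->
     (((j <= m)%nat -> B j (Pv j w)) /\ ((m < j)%nat -> Pv j w = e j)).

Definition Fm p Sv G m k (B : nat -> nat -> Prop) (e : nat -> nat) j :=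
  if le_dec j m then Qm p Sv G k j (B j) else Qm p Sv G k j (fun x => x = e j).

Definition upd (e : nat -> nat) c x := fun j => if Nat.eq_dec j c then x else e j.

Lemma Hm_lemma p N Sv G Rv Pv k : prob_mass p -> database_model p N Rv Pv Sv G ->
  (k <= N)%nat -> forall m, (m <= N)%nat -> forall B e,
  Prob p (Ev N Rv Pv m k B e) = pi p Rv k * prod1 N (Fm p Sv G m k B e).
Proof.
  intros Hm [HR [Hi H0]] Hk m. induction m; intros Hmn B e.
  - assert (Hev : forall w, Ev N Rv Pv 0 k B e w <->
       (Rv w = k /\ forall j, (1 <= j <= N)%nat -> Pv j w = e j)).
    { intro w; unfold Ev; split; intros [H1 H2]; split; auto; intros j Hj.
      - apply (proj2 (H2 j Hj)); lia.
      - split; [lia| auto]. }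
    rewrite (Prob_ext _ _ _ Hm Hev).
    destruct (Nat.eq_dec k 0) as [->|Hk0].
    + rewrite H0. f_equal. apply prod1_ext; intros j Hj.
      unfold Fm, Qm, law; destruct le_dec; [lia|]. destruct Nat.eq_dec; [lia|]. reflexivity.
    + rewrite Hi by lia. f_equal. apply prod1_ext; intros j Hj.
      unfold Fm, Qm, law; destruct le_dec; [lia|]. destruct Nat.eq_dec; reflexivity.
  - pose (c := S m).
    assert (Hc : (1 <= c <= N)%nat) by (unfold c; lia).
    pose (K := prod1 N (fun j => if Nat.eq_dec j c then 1 else Fm p Sv G m k B e j)).
    pose (A := fun x w => B c x /\ Ev N Rv Pv m k B (upd e c x) w).
    assert (HA : Prob p (Ev N Rv Pv (S m) k B e) = Prob p (fun w => exists x, A x w)).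
    { apply Prob_ext; auto; intro w; unfold A, Ev, upd; split.
      - intros [H1 H2]. exists (Pv c w). split; [apply H2; auto; unfold c; lia|].
        split; auto. intros j Hj; split; [intros; apply H2; auto; lia|].
        intros Hmj. destruct Nat.eq_dec; auto. apply H2; auto. unfold c in *; lia.
      - intros [x [Hx [H1 H2]]]. split; auto. intros j Hj; split.
        + intros Hjm. destruct (Nat.eq_dec j c).
          * subst j. destruct (H2 c Hc) as [_ H3]. rewrite H3 by (unfold c; lia).
            destruct Nat.eq_dec; [auto| congruence].
          * apply H2; auto; unfold c in *; lia.
        + intros Hmj. destruct (H2 j Hj) as [_ H3]. rewrite H3 by (unfold c in *; lia).
          destruct Nat.eq_dec; [unfold c in *; lia| auto]. }
    assert (HD : forall x y w, A x w -> A y w -> x = y).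
    { intros x y w [_ [_ Hx]] [_ [_ Hy]].
      destruct (Hx c Hc) as [_ Hx']; destruct (Hy c Hc) as [_ Hy'].
      assert (Pv c w = x).
      { rewrite Hx' by (unfold c; lia). unfold upd; destruct (Nat.eq_dec c c); congruence. }
      assert (Pv c w = y).
      { rewrite Hy' by (unfold c; lia). unfold upd; destruct (Nat.eq_dec c c); congruence. }
      congruence. }
    assert (Hx : forall x, Prob p (A x) = (pi p Rv k * K) * Qm p Sv G k c (fun y => B c x /\ y = x)).
    { intro x. destruct (classic (B c x)) as [Hb|Hb].
      - assert (E1 : Prob p (A x) = Prob p (Ev N Rv Pv m k B (upd e c x))).
        { apply Prob_ext; auto. unfold A; tauto. }
        rewrite E1, IHm by lia. rewrite (prod1_extract N _ c Hc).
        assert (E2 : Fm p Sv G m k B (upd e c x) c = Qm p Sv G k c (fun y => y = x)).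
        { unfold Fm; destruct (le_dec c m); [unfold c in *; lia|]. unfold upd.
          destruct (Nat.eq_dec c c); [reflexivity|congruence]. }
        assert (E3 : prod1 N (fun j => if Nat.eq_dec j c then 1 else Fm p Sv G m k B (upd e c x) j) = K).
        { unfold K; apply prod1_ext; intros j Hj. destruct (Nat.eq_dec j c); auto.
          unfold Fm, upd. destruct (Nat.eq_dec j c); [congruence|reflexivity]. }
        assert (E4 : Qm p Sv G k c (fun y => B c x /\ y = x) = Qm p Sv G k c (fun y => y = x)).
        { unfold Qm; apply Prob_ext; auto; tauto. }
        rewrite E2, E3, E4. ring.
      - assert (E1 : Prob p (A x) = Prob p (fun _ => False)).
        { apply Prob_ext; auto. unfold A; tauto. }
        assert (E4 : Qm p Sv G k c (fun y => B c x /\ y = x) = Prob p (fun _ => False)).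
        { unfold Qm; apply Prob_ext; auto; tauto. }
        rewrite E1, E4, Prob_false by auto. ring. }
    assert (HS : infinite_sum (fun x => Qm p Sv G k c (fun y => B c x /\ y = x)) (Qm p Sv G k c (B c))).
    { unfold Qm.
      rewrite (Prob_ext p (fun w => B c (law Sv G k c w)) (fun w => exists x, B c x /\ law Sv G k c w = x)).
      - apply Prob_countable; auto. intros x y w [_ H1] [_ H2]; congruence.
      - auto.
      - intro w; split; [intro; eexists; split; eauto| intros [x [H1 H2]]; subst; auto]. }
    rewrite HA. apply uniqueness_sum with (fun x => Prob p (A x)); [apply Prob_countable; auto|].
    apply isum_ext with (fun x => (pi p Rv k * K) * Qm p Sv G k c (fun y => B c x /\ y = x));
      [intros; rewrite Hx; auto|].
    replace (pi p Rv k * prod1 N (Fm p Sv G (S m) k B e)) with ((pi p Rv k * K) * Qm p Sv G k c (B c)).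
    + apply isum_scal; auto.
    + rewrite (prod1_extract N _ c Hc).
      assert (E2 : Fm p Sv G (S m) k B e c = Qm p Sv G k c (B c)).
      { unfold Fm; destruct (le_dec c (S m)); [reflexivity| unfold c in *; lia]. }
      assert (E3 : prod1 N (fun j => if Nat.eq_dec j c then 1 else Fm p Sv G (S m) k B e j) = K).
      { unfold K; apply prod1_ext; intros j Hj. destruct (Nat.eq_dec j c); auto.
        unfold Fm. destruct (le_dec j (S m)), (le_dec j m); auto; unfold c in *; lia. }
      rewrite E2, E3; ring.
Qed.

Lemma decomp p (X : nat -> nat) (C : nat -> Prop) : prob_mass p ->
  infinite_sum (fun x => Prob p (fun w => C x /\ X w = x)) (Prob p (fun w => C (X w))).
Proof.
  intros Hm.
  rewrite (Prob_ext p (fun w => C (X w)) (fun w => exists x, C x /\ X w = x)).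
  - apply Prob_countable; auto. intros x y w [_ H1] [_ H2]; congruence.
  - auto.
  - intro w; split; [intro; eexists; split; eauto| intros [x [H1 H2]]; subst; auto].
Qed.

Lemma S_to_G p Sv G c : prob_mass p ->
  (forall e, 0 < Prob p (fun w => Sv w = e) -> 0 < Prob p (fun w => G w = e)) ->
  Prob p (fun w => LR p Sv G (Sv w) = c) = c * Prob p (fun w => LR p Sv G (G w) = c).
Proof.
  intros Hm HSG.
  apply uniqueness_sum with (fun x => Prob p (fun w => LR p Sv G x = c /\ Sv w = x)).
  - apply decomp; auto.
  - apply isum_ext with (fun x => c * Prob p (fun w => LR p Sv G x = c /\ G w = x)).
    + intro x. destruct (classic (LR p Sv G x = c)) as [Hc|Hc].
      * rewrite (Prob_ext p (fun w => LR p Sv G x = c /\ G w = x) (fun w => G w = x)) by (auto; tauto).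
        rewrite (Prob_ext p (fun w => LR p Sv G x = c /\ Sv w = x) (fun w => Sv w = x)) by (auto; tauto).
        unfold LR in Hc. destruct Rlt_dec as [Hlt|Hnlt].
        -- rewrite <- Hc. field. lra.
        -- pose proof (Prob_nonneg p (fun w => G w = x) Hm).
           pose proof (Prob_nonneg p (fun w => Sv w = x) Hm).
           assert (Prob p (fun w => Sv w = x) = 0).
           { destruct (Rle_lt_or_eq_dec _ _ H0); auto. exfalso; apply Hnlt; apply HSG; auto. }
           assert (Prob p (fun w => G w = x) = 0) by lra. rewrite H1, H2; ring.
      * rewrite (Prob_ext p (fun w => LR p Sv G x = c /\ G w = x) (fun _ => False)) by (auto; tauto).
        rewrite (Prob_ext p (fun w => LR p Sv G x = c /\ Sv w = x) (fun _ => False)) by (auto; tauto).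
        rewrite Prob_false by auto; ring.
    + apply isum_scal. apply decomp; auto.
Qed.

Lemma PRk p N Sv G Rv Pv r k : prob_mass p ->
  (forall e, 0 < Prob p (fun w => Sv w = e) -> 0 < Prob p (fun w => G w = e)) ->
  database_model p N Rv Pv Sv G -> (k <= N)%nat ->
  Prob p (fun w => Rv w = k /\ LRD_event p Sv G Pv N r w) =
  pi p Rv k * (if Nat.eq_dec k 0 then 1 else r k) *
    prod1 N (fun j => Prob p (fun w => LR p Sv G (G w) = r j)).
Proof.
  intros Hm HSG HD Hk.
  pose (B := fun j x => LR p Sv G x = r j).
  rewrite (Prob_ext p _ (Ev N Rv Pv N k B (fun _ => 0%nat))).
  2: auto.
  2: { intro w; unfold Ev, LRD_event, B; split.
       - intros [H1 H2]; split; auto; intros j Hj; split; [intros; apply H2; auto| lia].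
       - intros [H1 H2]; split; auto; intros j Hj; apply (proj1 (H2 j Hj)); lia. }
  rewrite (Hm_lemma p N Sv G Rv Pv k Hm HD Hk N (le_n _)).
  rewrite (prod1_ext N _ (fun j => Qm p Sv G k j (B j))).
  2: { intros j Hj; unfold Fm; destruct (le_dec j N); [reflexivity|lia]. }
  destruct (Nat.eq_dec k 0) as [->|Hk0].
  - rewrite Rmult_1_r. f_equal. apply prod1_ext; intros j Hj.
    unfold Qm, law, B. destruct (Nat.eq_dec j 0); [lia|reflexivity].
  - rewrite (prod1_extract N _ k) by lia.
    rewrite (prod1_extract N (fun j => Prob p (fun w => LR p Sv G (G w) = r j)) k) by lia.
    assert (E1 : Qm p Sv G k k (B k) = r k * Prob p (fun w => LR p Sv G (G w) = r k)).
    { unfold Qm, law, B. destruct (Nat.eq_dec k k); [|congruence]. apply S_to_G; auto. }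
    rewrite E1.
    rewrite (prod1_ext N (fun j => if Nat.eq_dec j k then 1 else Qm p Sv G k j (B j))
        (fun j => if Nat.eq_dec j k then 1 else Prob p (fun w => LR p Sv G (G w) = r j))).
    + ring.
    + intros j Hj. destruct (Nat.eq_dec j k); auto. unfold Qm, law, B.
      destruct (Nat.eq_dec j k); [congruence|reflexivity].
Qed.

Lemma finsum p (Rv : nat -> nat) (L : nat -> Prop) i : prob_mass p -> forall n,
  Prob p (fun w => (1 <= Rv w <= n)%nat /\ Rv w <> i /\ L w) =
  sum1 n (fun k => if Nat.eq_dec k i then 0 else Prob p (fun w => Rv w = k /\ L w)).
Proof.
  intros Hm n; induction n.
  - simpl. rewrite <- (Prob_false p Hm). apply Prob_ext; auto; intro; lia.
  - cbn [sum1]. rewrite <- IHn. destruct (Nat.eq_dec (Datatypes.S n) i).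
    + rewrite Rplus_0_r. apply Prob_ext; auto; intro w; split; intros [H1 [H2 H3]]; repeat split; auto; lia.
    + rewrite <- Prob_add; auto.
      * apply Prob_ext; auto; intro w; split.
        -- intros [H1 [H2 H3]]. destruct (Nat.eq_dec (Rv w) (Datatypes.S n)); [right; auto| left; repeat split; auto; lia].
        -- intros [[H1 [H2 H3]]|[H1 H2]]; repeat split; auto; lia.
      * intros w [H1 _] [H2 _]; lia.
Qed.

Theorem mainTheorem2 (p : nat -> R) (N : nat) (S G Rv : nat -> nat)
    (Pv : nat -> nat -> nat) (r : nat -> R) (i : nat) :
  prob_mass p ->
  (1 <= N)%nat ->
  (forall e, 0 < Prob p (fun w => S w = e) -> 0 < Prob p (fun w => G w = e)) ->
  database_model p N Rv Pv S G ->
  0 < Prob p (LRD_event p S G Pv N r) ->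
  (1 <= i <= N)%nat ->
  0 < pi p Rv i < 1 ->
  CondProb p (fun w => Rv w = i) (LRD_event p S G Pv N r)
    / CondProb p (fun w => Rv w <> i) (LRD_event p S G Pv N r)
  = r i * pi p Rv i
    / (1 * pi p Rv 0 + sum1 N (fun k => if Nat.eq_dec k i then 0 else r k * pi p Rv k))
  /\
  (CondProb p (LRD_event p S G Pv N r) (fun w => Rv w <> i) <> 0 ->
   sum1 N (fun k => if Nat.eq_dec k i then 0 else r k * pi p Rv k) + pi p Rv 0 <> 0 ->
   CondProb p (LRD_event p S G Pv N r) (fun w => Rv w = i)
     / CondProb p (LRD_event p S G Pv N r) (fun w => Rv w <> i)
   = r i * (1 - pi p Rv i)
     / (sum1 N (fun k => if Nat.eq_dec k i then 0 else r k * pi p Rv k) + pi p Rv 0)).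
Proof.
  intros Hm HN HSG HD HL Hi Hpi.
  set (LRD := LRD_event p S G Pv N r) in *.
  set (g := prod1 N (fun j => Prob p (fun w => LR p S G (G w) = r j))).
  set (S' := sum1 N (fun k => if Nat.eq_dec k i then 0 else r k * pi p Rv k)).
  assert (PRi : Prob p (fun w => Rv w = i /\ LRD w) = pi p Rv i * r i * g).
  { unfold LRD, g; rewrite PRk by (auto; lia). destruct (Nat.eq_dec i 0); [lia|reflexivity]. }
  assert (PR0 : Prob p (fun w => Rv w = 0%nat /\ LRD w) = pi p Rv 0 * g).
  { unfold LRD, g; rewrite PRk by (auto; lia). destruct (Nat.eq_dec 0 0); [ring|lia]. }
  pose proof HD as HD0; destruct HD0 as [HR _].
  assert (Hne : Prob p (fun w => Rv w <> i /\ LRD w) = pi p Rv 0 * g + g * S').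
  { rewrite (Prob_ext p _ (fun w => (Rv w = 0%nat /\ LRD w) \/ ((1 <= Rv w <= N)%nat /\ Rv w <> i /\ LRD w))).
    2: auto.
    2: { intro w; specialize (HR w); split.
         - intros [H1 H2]; destruct (Nat.eq_dec (Rv w) 0); [left| right]; repeat split; auto; lia.
         - intros [[H1 H2]|[H1 [H2 H3]]]; split; auto; lia. }
    rewrite Prob_add; auto. 2: { intros w [H1 _] [H2 _]; lia. }
    rewrite PR0, finsum by auto. f_equal. unfold S'. rewrite sum1_scal.
    apply sum1_ext; intros k Hk. destruct (Nat.eq_dec k i); [ring|].
    unfold LRD, g; rewrite PRk by (auto; lia). destruct (Nat.eq_dec k 0); [lia|ring]. }
  assert (HLt : Prob p LRD = Prob p (fun w => Rv w = i /\ LRD w) + Prob p (fun w => Rv w <> i /\ LRD w)).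
  { rewrite <- Prob_add; auto. 2: { intros w [H1 _] [H2 _]; tauto. }
    apply Prob_ext; auto; intro w; destruct (Nat.eq_dec (Rv w) i); tauto. }
  assert (Hc : Prob p (fun w => Rv w <> i) = 1 - pi p Rv i).
  { rewrite <- (Prob_true p Hm). unfold pi.
    rewrite (Prob_ext p (fun _ => True) (fun w => Rv w = i \/ Rv w <> i)).
    2: auto.
    2: { intro w; destruct (Nat.eq_dec (Rv w) i); tauto. }
    rewrite Prob_add by tauto. ring. }
  assert (Hsw1 : Prob p (fun w => LRD w /\ Rv w = i) = Prob p (fun w => Rv w = i /\ LRD w)).
  { apply Prob_ext; auto; tauto. }
  assert (Hsw2 : Prob p (fun w => LRD w /\ Rv w <> i) = Prob p (fun w => Rv w <> i /\ LRD w)).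
  { apply Prob_ext; auto; tauto. }
  unfold CondProb. fold LRD. rewrite Hsw1, Hsw2, Hc, HLt, PRi, Hne in *. fold S'.
  assert (Hg : g <> 0).
  { intro Hg0. rewrite Hg0 in HL. lra. }
  split.
  - destruct (Req_dec (1 * pi p Rv 0 + S') 0) as [Hz|Hz].
    + replace (pi p Rv 0 * g + g * S') with 0 by (rewrite Rmult_1_l in Hz; replace (pi p Rv 0 * g + g * S') with (g * (pi p Rv 0 + S')) by ring; rewrite Hz; ring).
      rewrite Hz. unfold Rdiv. rewrite Rmult_0_l, Rinv_0. ring.
    + rewrite Rmult_1_l in *. field. split; auto.
      split; [lra|]. intro Hz'; apply Hz.
      assert (Hq : g * (pi p Rv 0 + S') = 0) by (rewrite <- Hz'; ring).
      destruct (Rmult_integral _ _ Hq); [contradiction| auto].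
  - intros H1 H2. change (Prob p (fun w => Rv w = i)) with (pi p Rv i). field. repeat split; try lra.
    intro Hz; apply H1. rewrite Hz. unfold Rdiv. ring.
Qed.
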